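(* Let $G$ be a group with finite generating set $S$, Cayley graph $\mathcal G$ with word metric $d$, and $0<\lambda<1$. Let $\xi\in\partial_\lambda G$, let $\gamma$ be a geodesic from $1$ to $\xi$, let $v$ be a vertex on $\gamma$, and set $r=\lambda^{d(1,v)}$. Then: (1) for every $R>0$ there is $C_1=C_1(R,\lambda)>0$ with $\Pi_1(v,R)\subset B_{\rho_\lambda}(\xi,C_1r)$; (2) for every $\kappa>0$ there are $R=R(\kappa)>0$ and $C_2=C_2(\kappa)>0$ such that if $\rho^v_\lambda(1,\xi)\ge\kappa$ then $B_{\rho_\lambda}(\xi,C_2r)\subset\Pi_1(v,R)$.
   Context: Floyd metric: for a basepoint $o\in G$, an edge $e$ of $\mathcal G$ has length $\lambda^{d(o,e)}$ and $\rho^o_\lambda$ is the induced length metric; $\rho_\lambda=\rho^1_\lambda$. $\partial_\lambda G=\overline G_\lambda\setminus G$, where $\overline G_\lambda$ is the Cauchy completion of $(G,\rho_\lambda)$; any two points of $G\cup\partial_\lambda G$ are joined by a (finite, semi-infinite or bi-infinite) geodesic of $\mathcal G$. Shadow: $\Pi_x(y,R)=\{\eta\in\partial_\lambda G:\text{ some geodesic }[x,\eta]\text{ meets }B(y,R)\}$. $B_{\rho_\lambda}(\xi,t)$ is the $\rho_\lambda$-ball in $\partial_\lambda G$. *)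

(* Defs.v *)
From HB Require Import structures.
From mathcomp Require Import all_boot all_order all_algebra.
From mathcomp Require Import all_classical all_reals all_analysis.
Set Implicit Arguments.
Unset Strict Implicit.
Unset Printing Implicit Defensive.
Import Order.TTheory GRing.Theory Num.Theory numFieldNormedType.Exports.
Local Open Scope classical_set_scope.
Local Open Scope ring_scope.

Section Floyd.
Variables (G : groupType) (S : seq G).

Definition generates : Prop :=
  forall g : G, exists w : seq G,
    all (fun s => (s \in S) || ((s^-1)%g \in S)) w /\
    g = foldr (fun a b => (a * b)%g) 1%g w.

Definition adj (x y : G) : Prop :=
  exists2 s, s \in S & (y = x * s)%g \/ (x = y * s)%g.

(* a walk x = p_0, p_1, ..., p_n in the Cayley graph, given by x and
   the list [p_1; ...; p_n] *)
Fixpoint walk (x : G) (p : seq G) : Prop :=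
  if p is y :: q then adj x y /\ walk y q else True.

Definition walk_from_to (x y : G) (p : seq G) : Prop :=
  walk x p /\ last x p = y.

Definition wdist (x y : G) : nat :=
  xget 0%N [set n | (exists p, walk_from_to x y p /\ size p = n) /\
                    forall p, walk_from_to x y p -> (n <= size p)%N].

Variables (R : realType) (lambda : R).

(* Floyd length of the edge {a,b} with basepoint o:
   lambda ^ d(o,e), where d(o,e) = min(d(o,a), d(o,b)). *)
Definition edge_len (o a b : G) : R :=
  lambda ^+ minn (wdist o a) (wdist o b).

Fixpoint walk_len (o x : G) (p : seq G) : R :=
  if p is y :: q then edge_len o x y + walk_len o y q else 0.

Definition rho (o x y : G) : R :=
  inf [set walk_len o x p | p in [set p | walk_from_to x y p]].

Definition rho1 (x y : G) : R := rho 1%g x y.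

Definition rho_cauchy (u : nat -> G) : Prop :=
  forall e : R, 0 < e -> exists N : nat, forall m n : nat,
    (N <= m)%N -> (N <= n)%N -> rho1 (u m) (u n) < e.

(* two sequences are equivalent (same point of the Cauchy completion) *)
Definition rho_equiv (u w : nat -> G) : Prop :=
  rho1 (u n) (w n) @[n --> \oo] --> 0.

(* Points of the boundary = points of the Cauchy completion not in G:
   represented by Cauchy sequences not converging to a point of G. *)
Definition is_boundary (u : nat -> G) : Prop :=
  rho_cauchy u /\ forall g : G, ~ rho_equiv u (fun _ => g).

Definition rho_bd (u w : nat -> G) : R := limn (fun n => rho1 (u n) (w n)).

Definition rho_pt_bd (o x : G) (u : nat -> G) : R :=
  limn (fun n => rho o x (u n)).

Definition geod_ray (g : nat -> G) : Prop :=
  forall i j : nat, wdist (g i) (g j) = `|(i%:Z - j%:Z)%R|%N.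

Definition geodesic_to (x : G) (xi : nat -> G) (g : nat -> G) : Prop :=
  g 0%N = x /\ geod_ray g /\ rho_equiv g xi.

Definition shadow (x y : G) (Rad : R) : set (nat -> G) :=
  [set eta | is_boundary eta /\
     exists g, geodesic_to x eta g /\ exists n, (wdist (g n) y)%:R <= Rad].

Definition bd_ball (xi : nat -> G) (t : R) : set (nat -> G) :=
  [set eta | is_boundary eta /\ rho_bd xi eta < t].

End Floyd.

(* Main.v *)
Require Import Defs.
From HB Require Import structures.
From mathcomp Require Import all_boot all_order all_algebra.
From mathcomp Require Import all_classical all_reals all_analysis.
Import Order.TTheory GRing.Theory Num.Theory numFieldNormedType.Exports.
Local Open Scope classical_set_scope.
Local Open Scope ring_scope.
From mathcomp Require Import zify ring lra.
Section Lim.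
Variable R : realType.

Lemma near_oo (P : nat -> Prop) : (exists N, forall n, (N <= n)%N -> P n) -> \forall n \near \oo, P n.
Proof. by case=> N HN; exists N => // n /= hn; apply: HN. Qed.

Lemma near_oo_ex (P : nat -> Prop) : (\forall n \near \oo, P n) -> exists N, forall n, (N <= n)%N -> P n.
Proof. by case=> N _ HN; exists N => n hn; apply: HN. Qed.

Lemma cauchy_real_cvg (a : nat -> R) :
  (forall e, 0 < e -> exists N, forall m n, (N <= m)%N -> (N <= n)%N -> `|a m - a n| < e) ->
  cvg (a @ \oo).
Proof.
move=> H; apply: cauchy_cvg; apply: cauchy_exP => e e0.
have [N HN] := H e e0; exists (a N); apply: near_oo; exists N => n hn.
by rewrite /ball /= HN.
Qed.

Lemma lim_ub (a : nat -> R) b : cvg (a @ \oo) ->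
  (exists N, forall n, (N <= n)%N -> a n <= b) -> limn a <= b.
Proof. by move=> ha hb; apply: limr_le => //; apply: near_oo. Qed.

Lemma lim_lb (a : nat -> R) b : cvg (a @ \oo) ->
  (exists N, forall n, (N <= n)%N -> b <= a n) -> b <= limn a.
Proof. by move=> ha hb; apply: limr_ge => //; apply: near_oo. Qed.

Lemma lim_lt_ev (a : nat -> R) c : cvg (a @ \oo) -> limn a < c ->
  exists N, forall n, (N <= n)%N -> a n < c.
Proof.
move=> ha hc; apply: near_oo_ex; have hl := ha.
have := proj1 (cvgrPdist_lt _ _) hl (c - limn a); rewrite subr_gt0 => /(_ _ hc).
apply: filterS => n hn.
have : a n - limn a < c - limn a by apply: le_lt_trans (ler_norm _) _; rewrite distrC.
by rewrite ltrD2r.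
Qed.

Lemma lim_gt_ev (a : nat -> R) c : cvg (a @ \oo) -> c < limn a ->
  exists N, forall n, (N <= n)%N -> c < a n.
Proof.
move=> ha hc; apply: near_oo_ex; have hl := ha.
have := proj1 (cvgrPdist_lt _ _) hl (limn a - c); rewrite subr_gt0 => /(_ _ hc).
apply: filterS => n hn.
have : limn a - a n < limn a - c by apply: le_lt_trans (ler_norm _) _.
by rewrite ltrD2l ltrN2.
Qed.

Lemma cvg0_eN (a : nat -> R) : a @ \oo --> 0 ->
  forall e, 0 < e -> exists N, forall n, (N <= n)%N -> `|a n| < e.
Proof.
move=> h e e0; apply: near_oo_ex; have := proj1 (@cvgrPdist_lt _ _ _ _ eventually_filter a 0) h e e0.
by apply: filterS => n; rewrite sub0r normrN.
Qed.

Lemma eN_cvg0 (a : nat -> R) :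
  (forall e, 0 < e -> exists N, forall n, (N <= n)%N -> `|a n| < e) -> a @ \oo --> 0.
Proof.
move=> h; apply: (proj2 (@cvgrPdist_lt _ _ _ _ eventually_filter a 0)) => e e0; apply: near_oo.
by have [N HN] := h e e0; exists N => n hn; rewrite sub0r normrN HN.
Qed.

End Lim.
Section Main.
Variables (G : groupType) (S : seq G) (R : realType) (lambda : R).
Hypothesis hgen : generates S.
Hypothesis l0 : 0 < lambda.
Hypothesis l1 : lambda < 1.

Local Notation adj := (adj S).
Local Notation walk := (walk S).
Local Notation wft := (walk_from_to S).
Local Notation d := (wdist S).
Local Notation wlen := (walk_len S lambda).
Local Notation elen := (edge_len S lambda).
Local Notation rho := (rho S lambda).


Lemma adj_sym x y : adj x y -> adj y x.
Proof. by case=> s hs [] ->; exists s => //; [right|left]. Qed.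

Lemma walk_cat x p q : walk x (p ++ q) <-> walk x p /\ walk (last x p) q.
Proof. elim: p x => [|y p IH] x /=; first by tauto. rewrite IH; tauto. Qed.

Lemma walk_rcons x p y : walk x (rcons p y) <-> walk x p /\ adj (last x p) y.
Proof. rewrite -cats1 walk_cat /=; tauto. Qed.

Lemma wlen_cat o x p q : wlen o x (p ++ q) = wlen o x p + wlen o (last x p) q.
Proof. by elim: p x => [|y p IH] x /=; rewrite ?add0r // IH addrA. Qed.

Lemma wlen_rcons o x p y : wlen o x (rcons p y) = wlen o x p + elen o (last x p) y.
Proof. by rewrite -cats1 wlen_cat /= addr0. Qed.

Lemma elen_sym o a b : elen o a b = elen o b a.
Proof. by rewrite /edge_len minnC. Qed.

Lemma walk_rev x p : walk x p -> exists q, walk (last x p) q /\ last (last x p) q = x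
  /\ size q = size p /\ forall o, wlen o (last x p) q = wlen o x p.
Proof.
elim: p x => [|y p IH] x /=; first by move=> _; exists [::].
case=> hxy /IH [q [hq [hl [hs hw]]]]; exists (rcons q x); split.
  by apply/walk_rcons; split => //; rewrite hl; apply: adj_sym.
split; first by rewrite last_rcons.
split; first by rewrite size_rcons hs.
by move=> o; rewrite wlen_rcons hw hl elen_sym addrC.
Qed.

Lemma connected x y : exists p, wft x y p.
Proof.
have [w [hw e]] := hgen (x^-1 * y)%g.
suff H : forall ws x, all (fun s => (s \in S) || ((s^-1)%g \in S)) ws ->
   exists p, walk x p /\ last x p = (x * foldr (fun a b => (a * b)%g) 1%g ws)%g.
  by have [p [h1 h2]] := H w x hw; exists p; split => //; rewrite h2 -e mulVKg.
elim=> [|a ws IH] z /=; first by move=> _; exists [::]; rewrite mulg1.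
move=> /andP [ha /(IH (z * a)%g) [p [h1 h2]]]; exists ((z * a)%g :: p) => /=; split.
  split => //; case/orP: ha => ha; first by exists a => //; left.
  by exists (a^-1)%g => //; right; rewrite mulgK.
by rewrite h2 mulgA.
Qed.

Lemma wdist_spec x y : (exists p, wft x y p /\ size p = d x y) /\
  forall p, wft x y p -> (d x y <= size p)%N.
Proof.
rewrite /wdist; set P := [set n | _].
suff : P (xget 0%N P) by case.
apply: xgetPex.
have hex : exists n, `[< exists p, wft x y p /\ size p = n >].
  by have [p hp] := connected x y; exists (size p); apply/asboolP; exists p.
exists (ex_minn hex); split.
  by case: ex_minnP => m /asboolP [p hp] _; exists p.
move=> p hp; case: ex_minnP => m _; apply; apply/asboolP; by exists p.
Qed.

Lemma wdist_le x y p : wft x y p -> (d x y <= size p)%N.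
Proof. by case: (wdist_spec x y) => _; apply. Qed.

Lemma wdist_geo x y : exists p, wft x y p /\ size p = d x y.
Proof. by case: (wdist_spec x y). Qed.

Lemma wdist_refl x : d x x = 0%N.
Proof. by apply/eqP; rewrite -leqn0; apply: (@wdist_le x x [::]). Qed.

Lemma wdist_tri x y z : (d x z <= d x y + d y z)%N.
Proof.
have [p [[hp1 hp2] hs1]] := wdist_geo x y.
have [q [[hq1 hq2] hs2]] := wdist_geo y z.
rewrite -hs1 -hs2 -size_cat; apply: wdist_le; split.
  by apply/walk_cat; rewrite hp2.
by rewrite last_cat hp2.
Qed.

Lemma wdist_sym x y : d x y = d y x.
Proof.
suff H : forall x y, (d y x <= d x y)%N by apply/eqP; rewrite eqn_leq !H.
move=> a b; have [p [[hp1 hp2] hs]] := wdist_geo a b.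
have [q [hq1 [hq2 [hq3 _]]]] := @walk_rev a p hp1.
by rewrite -hs -hq3; apply: wdist_le; rewrite -hp2.
Qed.

Lemma wdist_adj x y : adj x y -> (d x y <= 1)%N.
Proof. by move=> h; apply: (@wdist_le x y [:: y]). Qed.

Lemma wdist1_adj x y : d x y = 1%N -> adj x y.
Proof.
have [p [[hp1 hp2] hs]] := wdist_geo x y; move=> e; rewrite e in hs.
by case: p hp1 hp2 hs => [|z [|]] //= [h _] <-.
Qed.



Lemma elen_ge0 o a b : 0 <= elen o a b.
Proof. by rewrite /edge_len exprn_ge0 // ltW. Qed.

Lemma wlen_ge0 o x p : 0 <= wlen o x p.
Proof. by elim: p x => [|y p IH] x //=; rewrite addr_ge0 // elen_ge0. Qed.

Lemma rho_le o x y p : wft x y p -> rho o x y <= wlen o x p.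
Proof.
move=> hp; apply: ge_inf; last by exists p.
by exists 0 => _ [q _ <-]; apply: wlen_ge0.
Qed.

Lemma rho_lb o x y c : (forall p, wft x y p -> c <= wlen o x p) -> c <= rho o x y.
Proof.
move=> H; apply: lb_le_inf.
  by have [p hp] := connected x y; exists (wlen o x p), p.
by move=> _ [q hq <-]; apply: H.
Qed.

Lemma rho_ge0 o x y : 0 <= rho o x y.
Proof. by apply: rho_lb => p _; apply: wlen_ge0. Qed.

Lemma rho_refl o x : rho o x x = 0.
Proof.
apply/eqP; rewrite eq_le rho_ge0 andbT.
by apply: (le_trans (@rho_le o x x [::] _)).
Qed.

Lemma rho_tri o x y z : rho o x z <= rho o x y + rho o y z.
Proof.
rewrite -lerBlDl; apply: rho_lb => q [hq1 hq2].
rewrite lerBlDl -lerBlDr; apply: rho_lb => p [hp1 hp2].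
rewrite lerBlDr; apply: le_trans (@rho_le o x z (p ++ q) _) _.
  by split; [apply/walk_cat; rewrite hp2 | rewrite last_cat hp2].
by rewrite wlen_cat hp2.
Qed.

Lemma rho_sym o x y : rho o x y = rho o y x.
Proof.
suff H : forall a b, rho o b a <= rho o a b by apply/eqP; rewrite eq_le !H.
move=> a b; apply: rho_lb => p [hp1 hp2].
have [q [hq1 [hq2 [_ hq4]]]] := @walk_rev a p hp1.
rewrite -hq4 hp2; apply: rho_le; split; by rewrite -?hp2.
Qed.



Lemma pw_ge0 n : 0 <= lambda ^+ n.
Proof. by rewrite exprn_ge0 // ltW. Qed.

Lemma pw_gt0 n : 0 < lambda ^+ n.
Proof. by rewrite exprn_gt0. Qed.

Lemma pw_mono m n : (n <= m)%N -> lambda ^+ m <= lambda ^+ n.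
Proof. by move=> h; apply: ler_wiXn2l => //; rewrite ltW. Qed.

Lemma rho_adj o a b : adj a b -> rho o a b <= elen o a b.
Proof.
move=> h; apply: le_trans (@rho_le o a b [:: b] _) _.
  by split.
by rewrite /= addr0.
Qed.

Lemma elen_base o o' a b : lambda ^+ d o o' * elen o' a b <= elen o a b.
Proof.
rewrite /edge_len -exprD; apply: pw_mono.
have h1 := wdist_tri o o' a; have h2 := wdist_tri o o' b.
lia.
Qed.

Lemma wlen_base o o' x p : lambda ^+ d o o' * wlen o' x p <= wlen o x p.
Proof.
elim: p x => [|y p IH] x /=; first by rewrite mulr0.
by rewrite mulrDr lerD // elen_base.
Qed.

Lemma rho_base o o' x y : lambda ^+ d o o' * rho o' x y <= rho o x y.
Proof.
apply: rho_lb => // p hp; apply: le_trans (wlen_base o o' x p).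
by rewrite ler_wpM2l ?pw_ge0 // rho_le.
Qed.

Lemma rho_base' o x y : rho o x y <= rho 1%g x y / lambda ^+ d 1%g o.
Proof. by rewrite ler_pdivlMr ?pw_gt0 // mulrC rho_base. Qed.

Lemma rho_lip o x a b : `|rho o x a - rho o x b| <= rho o a b.
Proof.
have h1 := rho_tri o x a b; have h2 := rho_tri o x b a.
rewrite (rho_sym o b a) in h2.
rewrite ler_norml; apply/andP; split; lra.
Qed.

Lemma gseg (h : nat -> G) L :
  (forall t, (t <= L)%N -> d 1%g (h t) = t) ->
  (forall t, (t < L)%N -> adj (h t) (h t.+1)) ->
  forall i n, (i + n <= L)%N ->
  rho 1%g (h i) (h (i + n)%N) <= (lambda ^+ i - lambda ^+ (i + n)%N) / (1 - lambda).
Proof.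
move=> H1 H2 i; elim=> [|n IH] hn.
  have -> : (i + 0)%N = i by lia.
  by rewrite subrr mul0r rho_refl.
apply: le_trans (rho_tri _ _ (h (i + n)%N) _) _.
have e : (i + n.+1 = (i + n).+1)%N by rewrite addnS.
have hle : rho 1%g (h (i + n)%N) (h (i + n.+1)%N) <= lambda ^+ (i + n)%N.
  rewrite e; apply: le_trans (rho_adj 1%g _ _ (H2 (i + n)%N _)) _; first by lia.
  by rewrite /edge_len !H1 ?minnSS; try lia; rewrite (minn_idPl _) // leqnSn.
apply: le_trans (lerD (IH _) hle) _; first by lia.
rewrite e exprS le_eqVlt; apply/orP; left; apply/eqP; field.
by rewrite subr_eq0 gt_eqF.
Qed.

Lemma gseg' (h : nat -> G) L :
  (forall t, (t <= L)%N -> d 1%g (h t) = t) ->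
  (forall t, (t < L)%N -> adj (h t) (h t.+1)) ->
  forall i j, (i <= j)%N -> (j <= L)%N ->
  rho 1%g (h i) (h j) <= lambda ^+ i / (1 - lambda).
Proof.
move=> H1 H2 i j hij hjL; rewrite -(subnKC hij).
apply: le_trans (@gseg h L H1 H2 i (j - i)%N _) _; first by rewrite subnKC.
by rewrite ler_pM2r ?invr_gt0 ?subr_gt0 // lerBlDr lerDl pw_ge0.
Qed.

Lemma walk_bound y p : walk y p ->
  wlen 1%g y p <= (size p)%:R * lambda ^+ (d 1%g y - size p).
Proof.
elim: p y => [|z p IH] y /=; first by rewrite mul0r.
case=> hyz /IH hp; rewrite -add1n natrD mulrDl mul1r.
have hd : (d 1%g y <= d 1%g z + 1)%N.
  by apply: leq_trans (wdist_tri _ z _) _; rewrite leq_add2l wdist_sym wdist_adj // adj_sym.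
apply: lerD.
  by rewrite /edge_len; apply: pw_mono; lia.
apply: le_trans hp _; rewrite ler_wpM2l //; apply: pw_mono; lia.
Qed.



Local Notation rho1 := (rho1 S lambda).

Lemma pw_divK m : lambda ^+ (m - m) = 1.
Proof. by rewrite subnn expr0. Qed.

Lemma pw_sub k M : lambda ^+ (k - M) <= lambda ^+ k / lambda ^+ M.
Proof.
rewrite ler_pdivlMr ?pw_gt0 // -exprD; apply: pw_mono; lia.
Qed.

Lemma cvg_rho_pt o x u : rho_cauchy S lambda u -> cvg ((fun n => rho o x (u n)) @ \oo).
Proof.
move=> hu; apply: cauchy_real_cvg => e e0.
have hK := pw_gt0 (d 1%g o).
have [N HN] := hu (e * lambda ^+ d 1%g o) (mulr_gt0 e0 hK).
exists N => m n hm hn; apply: le_lt_trans (rho_lip _ _ _ _) _.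
apply: le_lt_trans (rho_base' _ _ _) _.
by rewrite ltr_pdivrMr // HN.
Qed.

Lemma cvg_rho_bd u w : rho_cauchy S lambda u -> rho_cauchy S lambda w ->
  cvg ((fun n => rho1 (u n) (w n)) @ \oo).
Proof.
move=> hu hw; apply: cauchy_real_cvg => e e0.
have e2 : 0 < e / 2 by rewrite divr_gt0.
have [N1 H1] := hu _ e2; have [N2 H2] := hw _ e2.
exists (maxn N1 N2) => m n hm hn.
have h1 := H1 m n ltac:(lia) ltac:(lia); have h2 := H2 m n ltac:(lia) ltac:(lia).
rewrite /rho1 /Defs.rho1 in h1 h2 *.
have t1 := rho_tri 1%g (u m) (u n) (w m); have t2 := rho_tri 1%g (u n) (w n) (w m).
have t3 := rho_tri 1%g (u n) (u m) (w n); have t4 := rho_tri 1%g (u m) (w m) (w n).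
rewrite (rho_sym _ (w n) (w m)) in t2. rewrite (rho_sym _ (u n) (u m)) in t3.
rewrite ltr_norml; apply/andP; split; lra.
Qed.

Arguments cvg_rho_bd [u w].
Arguments cvg_rho_pt o x [u].

Lemma ray_d1 (g : nat -> G) : g 0%N = 1%g -> geod_ray S g -> forall t, d 1%g (g t) = t.
Proof. by move=> h0 hr t; rewrite -h0 hr; lia. Qed.

Arguments ray_d1 [g].

Lemma ray_adj (g : nat -> G) : geod_ray S g -> forall t, adj (g t) (g t.+1).
Proof. by move=> hr t; apply: wdist1_adj; rewrite hr; lia. Qed.

Arguments ray_adj [g].

Lemma ray_tail (g : nat -> G) : g 0%N = 1%g -> geod_ray S g ->
  forall i j, (i <= j)%N -> rho 1%g (g i) (g j) <= lambda ^+ i / (1 - lambda).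
Proof.
move=> h0 hr i j hij; apply: (@gseg' g j) => // t _.
  exact: ray_d1. exact: ray_adj.
Qed.

Arguments ray_tail [g].

Lemma equiv_eN u w : rho_equiv S lambda u w ->
  forall e, 0 < e -> exists N, forall n, (N <= n)%N -> rho 1%g (u n) (w n) < e.
Proof.
move=> h e e0; have [N HN] := @cvg0_eN R _ h e e0; exists N => n hn.
by have := HN n hn; rewrite ger0_norm // rho_ge0.
Qed.

Arguments equiv_eN [u w].

Lemma part1 (Rad : R) : 0 < Rad -> exists C1 : R, 0 < C1 /\
     forall (xi gam : nat -> G) (k : nat),
       is_boundary S lambda xi -> geodesic_to S lambda 1%g xi gam ->
       shadow S lambda 1%g (gam k) Rad `<=`
         bd_ball S lambda xi (C1 * lambda ^+ wdist S 1%g (gam k)).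
Proof.
move=> hR; set M := (Num.Def.truncn Rad).+1.
have hM : Rad < M%:R by apply: truncnS_gt.
set K := 1 / lambda ^+ M.
have hK : 0 < K by rewrite divr_gt0 ?pw_gt0.
have hl1 : 0 < 1 - lambda by rewrite subr_gt0.
have hil : 0 < 1 / (1 - lambda) by rewrite divr_gt0.
exists (2 + 1 / (1 - lambda) + M%:R * K + K / (1 - lambda)); split.
  have hMK : 0 < M%:R * K by rewrite mulr_gt0 // ltr0n.
  have hKl : 0 < K / (1 - lambda) by rewrite divr_gt0.
  lra.
move=> xi gam k hxi [hg0 [hgr hgeq]] eta [heta [al [[ha0 [har haeq]] [n hn]]]].
split => //.
have dk := ray_d1 hg0 hgr k; rewrite dk.
set r := lambda ^+ k.
have hr : 0 < r by apply: pw_gt0.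
have hD : (d (al n) (gam k) <= M)%N.
  have := le_lt_trans hn hM; rewrite ltr_nat; lia.
have hnk : (k <= n + M)%N.
  have := wdist_tri 1%g (al n) (gam k); rewrite dk ray_d1 //; lia.
have hcv := cvg_rho_bd (proj1 hxi) (proj1 heta).
have r2 : 0 < r / 2 by rewrite divr_gt0.
have [N1 HN1] := equiv_eN hgeq _ r2.
have [N2 HN2] := equiv_eN haeq _ r2.
set B := r + r / (1 - lambda) + M%:R * (r * K) + r * K / (1 - lambda).
suff hB : rho_bd S lambda xi eta <= B.
  apply: le_lt_trans hB _; rewrite /B.
  have -> : (2 + 1 / (1 - lambda) + M%:R * K + K / (1 - lambda)) * r =
     r + (r + r / (1 - lambda) + M%:R * (r * K) + r * K / (1 - lambda)).
    by field; rewrite subr_eq0 gt_eqF.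
  by rewrite ltrDr.
apply: lim_ub => //; exists (maxn (maxn k n) (maxn N1 N2)) => j.
rewrite !geq_max => /andP [/andP [hkj hnj] /andP [hN1 hN2]].
have h1 := HN1 j hN1; have h5 := HN2 j hN2.
rewrite (rho_sym _ (gam j)) in h1.
have h2 : rho 1%g (gam k) (gam j) <= r / (1 - lambda) by apply: ray_tail.
rewrite (rho_sym _ (gam k)) in h2.
have h4 : rho 1%g (al n) (al j) <= r * K / (1 - lambda).
  apply: le_trans (ray_tail ha0 har n j hnj) _.
  rewrite ler_pM2r ?invr_gt0 // /K mulrA mulr1; apply: le_trans (pw_sub _ _).
  by apply: pw_mono; rewrite leq_subLR addnC.
have h3 : rho 1%g (gam k) (al n) <= M%:R * (r * K).
  have [p [[hp1 hp2] hs]] := wdist_geo (gam k) (al n).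
  apply: le_trans (rho_le _ _ _ _ (conj hp1 hp2)) _.
  apply: le_trans (walk_bound _ _ hp1) _; rewrite hs dk.
  rewrite wdist_sym in hD.
  apply: ler_pM; rewrite ?ler_nat ?pw_ge0 //.
  rewrite /K mulrA mulr1; apply: le_trans (pw_sub _ _).
  by apply: pw_mono; apply: leq_sub2l.
rewrite /B /rho1 /Defs.rho1 /=.
have t1 := rho_tri 1%g (xi j) (gam j) (eta j).
have t2 := rho_tri 1%g (gam j) (gam k) (eta j).
have t3 := rho_tri 1%g (gam k) (al n) (eta j).
have t4 := rho_tri 1%g (al n) (al j) (eta j).
lra.
Qed.

Lemma walk_nth_adj x0 x P t : walk x P -> (t < size P)%N ->
  adj (nth x0 (x :: P) t) (nth x0 (x :: P) t.+1).
Proof.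
elim: P x t => [|y P IH] x t //= [hxy hP].
by case: t => [|t] ht //=; apply: IH.
Qed.

Lemma nth_size_last (x0 x : G) (P : seq G) : nth x0 (x :: P) (size P) = last x P.
Proof. by elim: P x => [|y P IH] x //=. Qed.

Lemma chain_dist (h : nat -> G) L : (forall t, (t < L)%N -> adj (h t) (h t.+1)) ->
  forall s n, (s + n <= L)%N -> (d (h s) (h (s + n)%N) <= n)%N.
Proof.
move=> H s; elim=> [|n IH] hn.
  by rewrite addn0 wdist_refl.
apply: leq_trans (wdist_tri _ (h (s + n)%N) _) _.
have h1 : (s + n <= L)%N by lia.
have h2 : (s + n < L)%N by lia.
have h3 := wdist_adj _ _ (H _ h2).
rewrite addnS; have := IH h1; lia.
Qed.

Arguments chain_dist [h L].

Lemma geo_pos (h : nat -> G) L : (forall t, (t < L)%N -> adj (h t) (h t.+1)) ->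
  d (h 0%N) (h L) = L ->
  forall s t, (s <= t)%N -> (t <= L)%N -> d (h s) (h t) = (t - s)%N.
Proof.
move=> H hL s t hst htL.
have e1 := chain_dist H 0 s ltac:(lia).
have e2 := chain_dist H s (t - s) ltac:(lia).
have e3 := chain_dist H t (L - t) ltac:(lia).
rewrite add0n in e1; rewrite subnKC // in e2; rewrite subnKC // in e3.
have t1 := wdist_tri (h 0%N) (h s) (h L).
have t2 := wdist_tri (h s) (h t) (h L).
lia.
Qed.

Arguments geo_pos [h L].

Lemma walk_mem_nth (x0 x : G) (P : seq G) (z : G) : z \in x :: P ->
  exists t, (t <= size P)%N /\ nth x0 (x :: P) t = z.
Proof.
move=> hz; exists (index z (x :: P)); split; last exact: nth_index.
by have := hz; rewrite -index_mem /=.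
Qed.

Lemma wdist0 (x y : G) : d x y = 0%N -> x = y.
Proof.
move=> h; have [p [[hp1 hp2] hs]] := wdist_geo x y.
by move: hs hp2; rewrite h; case: p hp1.
Qed.

Definition nbrs (x : G) : seq G :=
  [seq (x * s)%g | s <- S] ++ [seq (x * s^-1)%g | s <- S].

Lemma adj_nbrs x y : adj x y -> y \in nbrs x.
Proof.
case=> s hs [] ->; rewrite mem_cat; apply/orP.
  by left; apply: map_f.
by right; rewrite -{1}(mulgK s y); apply: map_f.
Qed.

Fixpoint ball_list (T : nat) : seq G :=
  if T is T'.+1 then ball_list T' ++ flatten [seq nbrs x | x <- ball_list T']
  else [:: 1%g].

Lemma ball_list_mem T y : (d 1%g y <= T)%N -> y \in ball_list T.
Proof.
elim: T y => [|T IH] y hy /=.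
  have e : d 1%g y = 0%N by apply/eqP; rewrite -leqn0.
  by rewrite -(wdist0 _ _ e) mem_head.
rewrite mem_cat; apply/orP; case: (leqP (d 1%g y) T) => hT; first by left; apply: IH.
right; have e : d 1%g y = T.+1 by apply/eqP; rewrite eqn_leq hy.
have [p [[hp1 hp2] hs]] := wdist_geo 1%g y.
set h := fun t => nth 1%g (1%g :: p) t.
have hch : forall t, (t < size p)%N -> adj (h t) (h t.+1).
  by move=> t ht; apply: walk_nth_adj.
have hL : d (h 0%N) (h (size p)) = size p.
  by rewrite /h nth_size_last hp2 /= hs.
have hTT : d (h 0%N) (h T) = T.
  by rewrite (geo_pos hch hL 0 T (leq0n T)) ?subn0 // hs e.
apply/flatten_mapP; exists (h T); first by apply: IH; rewrite [X in d X _](_ : _ = h 0%N) // hTT.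
have := hch T; rewrite hs e => /(_ (ltnSn _)).
by rewrite {2}/h -e -hs nth_size_last hp2 => /adj_nbrs.
Qed.

Definition Inf (J : set nat) := forall N, exists j, (N <= j)%N /\ J j.

Lemma Inf_sub (A B : set nat) : Inf A -> A `<=` B -> Inf B.
Proof. by move=> hA hAB N; have [j [h1 h2]] := hA N; exists j; split => //; apply: hAB. Qed.

Arguments Inf_sub [A B].

Lemma PH (T : eqType) (l : seq T) (J : set nat) (f : nat -> T) :
  Inf J -> (forall j, J j -> f j \in l) ->
  exists2 c, c \in l & Inf [set j | J j /\ f j = c].
Proof.
elim: l J => [|c l IH] J hJ hf.
  by have [j [_ /hf]] := hJ 0%N.
have [H|H] := pselect (Inf [set j | J j /\ f j = c]).
  by exists c => //; rewrite mem_head.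
move/existsNP: H => [N HN].
have hI' : Inf [set j | J j /\ (N <= j)%N].
  move=> M; have [j [h1 h2]] := hJ (maxn N M); exists j; split => //.
    by apply: leq_trans h1; rewrite leq_maxr.
  by split => //; apply: leq_trans h1; rewrite leq_maxl.
have hf' : forall j, [set j | J j /\ (N <= j)%N] j -> f j \in l.
  move=> j [hj hNj]; have := hf j hj; rewrite inE => /orP [/eqP hc|] //.
  by exfalso; apply: HN; exists j.
have [c' hc' hi] := IH _ hI' hf'.
exists c'; first by rewrite inE hc' orbT.
apply: (Inf_sub hi) => j /= [[h1 _] h2]; by split.
Qed.

Lemma bd_unbounded eta : is_boundary S lambda eta ->
  forall T, exists N, forall j, (N <= j)%N -> (T < d 1%g (eta j))%N.
Proof.
move=> [hc hnot] T.
have [H|H] := pselect (exists N, forall j, (N <= j)%N -> (T < d 1%g (eta j))%N) => //.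
exfalso.
have hI : Inf [set j | (d 1%g (eta j) <= T)%N].
  move=> N; apply: contrapT => hN; apply: H; exists N => j hj.
  rewrite ltnNge; apply/negP => hj'; apply: hN; by exists j.
have [c _ hc'] := @PH G (ball_list T) _ eta hI (fun j hj => ball_list_mem _ _ hj).
apply: (hnot c); apply: eN_cvg0 => e e0.
have [N HN] := hc e e0; have [j [hNj [_ hjc]]] := hc' N.
exists N => n hn; rewrite ger0_norm ?rho_ge0 //.
by rewrite -hjc; apply: HN.
Qed.

(* ---------- Karlsson-type estimate ---------- *)
Definition mu := Num.sqrt lambda.

Lemma mu_ge0 : 0 <= mu. Proof. exact: sqrtr_ge0. Qed.
Lemma mu_gt0 : 0 < mu. Proof. by rewrite sqrtr_gt0. Qed.
Lemma mu_sq : mu ^+ 2 = lambda. Proof. by rewrite sqr_sqrtr // ltW. Qed.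
Lemma mu_lt1 : mu < 1.
Proof.
rewrite ltNge; apply/negP => h; have := exprn_ege1 2 h; rewrite mu_sq => h2.
by have := lt_le_trans l1 h2; rewrite ltxx.
Qed.

Lemma lam_mu a : lambda ^+ a = mu ^+ (a * 2)%N.
Proof. by rewrite mulnC exprM mu_sq. Qed.

Lemma mu_mono m n : (n <= m)%N -> mu ^+ m <= mu ^+ n.
Proof. by move=> h; apply: ler_wiXn2l => //; [exact: mu_ge0 | rewrite ltW // mu_lt1]. Qed.

Lemma small_pow (z : R) e : 0 <= z -> z < 1 -> 0 < e -> exists N, forall n, (N <= n)%N -> z ^+ n < e.
Proof.
move=> z0 z1 e0; have hz : `|z| < 1 by rewrite ger0_norm.
have [N HN] := @cvg0_eN R _ (cvg_expr hz) e e0.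
by exists N => n hn; have := HN n hn; rewrite ger0_norm // exprn_ge0.
Qed.

Section Karlsson.
Variables (v : G) (M : nat).
Let k := d 1%g v.

Definition Phi (t : nat) : R := (mu ^+ (t - k)%N + (1 - mu ^+ (k - t)%N)) / (1 - mu).

Lemma Phi_rec t : mu ^+ ((t - k) + (k - t.+1))%N + Phi t.+1 = Phi t.
Proof.
have hm : 1 - mu != 0 by rewrite subr_eq0 gt_eqF // mu_lt1.
rewrite /Phi; case: (leqP k t) => h.
  have -> : (k - t.+1 = 0)%N by apply/eqP; rewrite subn_eq0 ltnW // ltnS.
  have -> : (k - t = 0)%N by apply/eqP; rewrite subn_eq0.
  have -> : (t.+1 - k = (t - k).+1)%N by rewrite subSn.
  rewrite addn0 expr0 exprS; set m := mu; set q := mu ^+ _; move: hm; rewrite -/m => hm; field; exact: hm.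
have -> : (t - k = 0)%N by apply/eqP; rewrite subn_eq0 (ltnW h).
have -> : (t.+1 - k = 0)%N by apply/eqP; rewrite subn_eq0.
have -> : (k - t = (k - t.+1).+1)%N by rewrite -subSn.
rewrite add0n expr0 exprS; set m := mu; set q := mu ^+ _; move: hm; rewrite -/m => hm; field; exact: hm.
Qed.

Lemma Phi_ge0 t : 0 <= Phi t.
Proof.
have h1 : 0 <= mu ^+ (t - k) by rewrite exprn_ge0 ?mu_ge0.
have h2 : mu ^+ (k - t) <= 1 by rewrite exprn_ile1 ?mu_ge0 // ltW // mu_lt1.
rewrite /Phi divr_ge0 //; first lra.
by rewrite subr_ge0 ltW // mu_lt1.
Qed.

Lemma Phi_le t : Phi t <= 2 / (1 - mu).
Proof.
rewrite /Phi ler_pM2r ?invr_gt0 ?subr_gt0 ?mu_lt1 //.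
have h1 : mu ^+ (t - k) <= 1 by rewrite exprn_ile1 ?mu_ge0 // ltW // mu_lt1.
have h2 : 0 <= mu ^+ (k - t) by rewrite exprn_ge0 ?mu_ge0.
lra.
Qed.

Lemma nat_karl (kk dvy dvz d1y d1z : nat) :
  (d1y <= kk + dvy)%N -> (kk <= d1y + dvy)%N -> (d1z <= kk + dvz)%N -> (kk <= d1z + dvz)%N ->
  d1z = d1y.+1 -> (M <= dvy)%N -> (M <= dvz)%N ->
  (M + ((d1y - kk) + (kk - d1y.+1)) <= minn dvy dvz * 2)%N.
Proof. lia. Qed.

Lemma karlsson y p : walk y p -> d 1%g (last y p) = (d 1%g y + size p)%N ->
  (forall z, z \in y :: p -> (M <= d v z)%N) ->
  wlen v y p <= mu ^+ M * Phi (d 1%g y).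
Proof.
elim: p y => [|z q IH] y /=.
  by move=> _ _ _; rewrite mulr_ge0 ?exprn_ge0 ?mu_ge0 ?Phi_ge0.
case=> hyz hq hl hM.
have hz1 : (d 1%g z <= d 1%g y + 1)%N.
  by apply: leq_trans (wdist_tri _ y _) _; rewrite leq_add2l (wdist_adj _ _ hyz).
have hq1 : (d 1%g (last z q) <= d 1%g z + size q)%N.
  by apply: leq_trans (wdist_tri _ z _) _; rewrite leq_add2l (wdist_le _ _ _ (conj hq (erefl _))).
have ez : d 1%g z = (d 1%g y).+1.
  move: hl hz1 hq1; clear; lia.
have hl' : d 1%g (last z q) = (d 1%g z + size q)%N.
  move: hl ez hq1; clear; lia.
have hIH := IH z hq hl' (fun w hw => hM w ltac:(by rewrite in_cons hw orbT)).
rewrite ez in hIH.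
have hedge : elen v y z <= mu ^+ M * mu ^+ ((d 1%g y - k) + (k - (d 1%g y).+1))%N.
  rewrite /edge_len -exprD lam_mu; apply: mu_mono.
  have a1 := wdist_tri 1%g v y; have a3 := wdist_tri 1%g v z.
  have a2 := wdist_tri 1%g y v; have a4 := wdist_tri 1%g z v.
  rewrite (wdist_sym y v) in a2; rewrite (wdist_sym z v) in a4.
  have b1 : (M <= d v y)%N by apply: hM; rewrite mem_head.
  have b2 : (M <= d v z)%N by apply: hM; rewrite in_cons mem_head orbT.
  exact: (nat_karl _ _ _ _ _ a1 a2 a3 a4 ez b1 b2).
rewrite -Phi_rec mulrDr; exact: lerD.
Qed.

End Karlsson.

(* ---------- Koenig-type construction of a limiting ray ---------- *)
Section Koenig.
Variables (pos : nat -> nat -> G) (sz : nat -> nat) (J0 : nat).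
Hypothesis hp0 : forall j, pos j 0%N = 1%g.
Hypothesis hadj : forall j t, (t < sz j)%N -> adj (pos j t) (pos j t.+1).
Hypothesis hunb : forall T, exists N, forall j, (N <= j)%N -> (T < sz j)%N.

Definition pickc (J : set nat) (t : nat) : G :=
  xget 1%g [set c | Inf [set j | J j /\ pos j t.+1 = c]].

Fixpoint stset (t : nat) : set nat :=
  if t is t'.+1 then [set j | stset t' j /\ pos j t = pickc (stset t') t']
  else [set j | (J0 <= j)%N].

Definition kray (t : nat) : G := if t is t'.+1 then pickc (stset t') t' else 1%g.

Lemma koenig t : Inf (stset t) /\
  (forall j, stset t j -> (J0 <= j)%N /\ forall s, (s <= t)%N -> pos j s = kray s).
Proof.
elim: t => [|t [IHi IHa]].
  split; first by move=> N; exists (maxn N J0); rewrite leq_maxl /= leq_maxr.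
  move=> j hj; split => // s; rewrite leqn0 => /eqP ->; exact: hp0.
have hex : exists c, Inf [set j | stset t j /\ pos j t.+1 = c].
  have hI : Inf [set j | stset t j /\ (t < sz j)%N].
    move=> N; have [N' HN'] := hunb t; have [j [h1 h2]] := IHi (maxn N N').
    exists j; split; first by apply: leq_trans h1; rewrite leq_maxl.
    by split => //; apply: HN'; apply: leq_trans h1; rewrite leq_maxr.
  have hf : forall j, [set j | stset t j /\ (t < sz j)%N] j ->
      pos j t.+1 \in nbrs (kray t).
    move=> j [h1 h2]; have [_ ha] := IHa j h1; rewrite -(ha t (leqnn t)).
    exact: adj_nbrs _ _ (hadj j t h2).
  have [c _ hc] := @PH G _ _ (fun j => pos j t.+1) hI hf; exists c.
  by apply: (Inf_sub hc) => j /= [[h1 _] h2].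
split.
  exact: (xgetPex 1%g hex).
move=> j /= [hj hjt]; have [hJ ha] := IHa j hj; split => // s.
rewrite leq_eqVlt => /orP [/eqP -> //|]; rewrite ltnS; exact: ha.
Qed.

Lemma koenig_pick t N : exists j, (N <= j)%N /\ (t <= sz j)%N /\ (J0 <= j)%N /\
  forall s, (s <= t)%N -> pos j s = kray s.
Proof.
have [N' HN'] := hunb t; have [j [h1 h2]] := (proj1 (koenig t)) (maxn N N').
have [h3 h4] := (proj2 (koenig t)) j h2.
exists j; split; first by apply: leq_trans h1; rewrite leq_maxl.
split; last by split.
by apply: ltnW; apply: HN'; apply: leq_trans h1; rewrite leq_maxr.
Qed.

End Koenig.

Lemma geo_walk (x y : G) (p : seq G) : wft x y p -> size p = d x y ->
  (forall t, (t < size p)%N -> adj (nth x (x :: p) t) (nth x (x :: p) t.+1)) /\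
  nth x (x :: p) (size p) = y /\
  (forall s t, (s <= t)%N -> (t <= size p)%N ->
     d (nth x (x :: p) s) (nth x (x :: p) t) = (t - s)%N).
Proof.
move=> [hp1 hp2] hs.
have hch : forall t, (t < size p)%N -> adj (nth x (x :: p) t) (nth x (x :: p) t.+1).
  by move=> t ht; apply: walk_nth_adj.
have hl : nth x (x :: p) (size p) = y by rewrite nth_size_last.
split => //; split => //.
apply: (@geo_pos (fun t => nth x (x :: p) t) (size p) hch).
by rewrite /= hl hs.
Qed.

Lemma nat_near (t k M a b c : nat) : a = t -> (a <= k + b)%N -> b = c -> (c <= M)%N -> (t <= k + M)%N.
Proof. lia. Qed.

Lemma nat_abs (a b : nat) : (a <= b)%N -> `|(a%:Z - b%:Z)%R|%N = (b - a)%N.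
Proof. lia. Qed.

Lemma nat_abs' (a b : nat) : (b < a)%N -> `|(a%:Z - b%:Z)%R|%N = (a - b)%N.
Proof. lia. Qed.

Lemma part2 (kappa : R) : 0 < kappa -> exists Rad C2 : R, 0 < Rad /\ 0 < C2 /\
     forall (xi gam : nat -> G) (k : nat),
       is_boundary S lambda xi -> geodesic_to S lambda 1%g xi gam ->
       kappa <= rho_pt_bd S lambda (gam k) 1%g xi ->
       bd_ball S lambda xi (C2 * lambda ^+ wdist S 1%g (gam k)) `<=`
         shadow S lambda 1%g (gam k) Rad.
Proof.
move=> hk0.
have hmu1 : 0 < 1 - mu by rewrite subr_gt0 mu_lt1.
have he : 0 < kappa * (1 - mu) / 4 by rewrite divr_gt0 // mulr_gt0.
have [M0 HM0] := small_pow _ _ mu_ge0 mu_lt1 he.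
set M := M0.+1.
have hmuM : mu ^+ M < kappa * (1 - mu) / 4 by apply: HM0; apply: leqnSn.
have hKL : mu ^+ M * (2 / (1 - mu)) < kappa / 2.
  rewrite mulrA ltr_pdivrMr //.
  have -> : kappa / 2 * (1 - mu) = kappa * (1 - mu) / 4 * 2 by field.
  by rewrite ltr_pM2r.
exists M%:R, (kappa / 4); split; first by rewrite ltr0n.
split; first by rewrite divr_gt0.
move=> xi gam k hxi [hg0 [hgr hgeq]] hkap eta [heta hball].
have dk := ray_d1 hg0 hgr k.
rewrite dk in hball.
set v := gam k in dk hkap *.
have hr : 0 < lambda ^+ k by apply: pw_gt0.
have [N1 HN1] := @lim_lt_ev R _ _ (cvg_rho_bd (proj1 hxi) (proj1 heta)) hball.
have h34 : 3 * kappa / 4 < limn (fun n => rho v 1%g (xi n)).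
  by apply: lt_le_trans hkap; lra.
have [N2 HN2] := @lim_gt_ev R _ _ (cvg_rho_pt v 1%g (proj1 hxi)) h34.
set J0 := maxn N1 N2.
have near : forall j, (J0 <= j)%N -> forall p, wft 1%g (eta j) p -> size p = d 1%g (eta j) ->
    exists z, z \in 1%g :: p /\ (d z v <= M)%N.
  move=> j hj p hp hs.
  have [H|H] := pselect (exists z, z \in 1%g :: p /\ (d z v <= M)%N) => //.
  exfalso.
  have hM : forall z, z \in 1%g :: p -> (M <= d v z)%N.
    move=> z hz; rewrite wdist_sym; apply: ltnW; rewrite ltnNge; apply/negP => hzM.
    by apply: H; exists z.
  have hl : d 1%g (last 1%g p) = (d 1%g 1%g + size p)%N.
    by rewrite (proj2 hp) wdist_refl add0n hs.
  have hk1 := karlsson v M 1%g p (proj1 hp) hl hM.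
  have hk2 := Phi_le v (d 1%g 1%g).
  have hk3 := rho_le v 1%g (eta j) p hp.
  have hb1 := HN1 j (leq_trans (leq_maxl _ _) hj).
  have hb2 := HN2 j (leq_trans (leq_maxr _ _) hj).
  have hb3 := rho_base' v (eta j) (xi j).
  rewrite dk (rho_sym 1%g (eta j)) in hb3.
  have hb4 : rho 1%g (xi j) (eta j) / lambda ^+ k < kappa / 4.
    by rewrite ltr_pdivrMr.
  have hb5 := rho_tri v 1%g (eta j) (xi j).
  have hk4 : mu ^+ M * Phi v (d 1%g 1%g) <= mu ^+ M * (2 / (1 - mu)).
    by rewrite ler_wpM2l // exprn_ge0 // mu_ge0.
  rewrite /rho1 /Defs.rho1 /= in hb1.
  lra.
pose P := fun j => xget [::] [set p | wft 1%g (eta j) p /\ size p = d 1%g (eta j)].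
have hP : forall j, wft 1%g (eta j) (P j) /\ size (P j) = d 1%g (eta j).
  by move=> j; apply: (xgetPex [::] (wdist_geo 1%g (eta j))).
pose pos := fun j t => nth 1%g (1%g :: P j) t.
pose sz := fun j => size (P j).
have hadj : forall j t, (t < sz j)%N -> adj (pos j t) (pos j t.+1).
  by move=> j; case: (geo_walk _ _ _ (proj1 (hP j)) (proj2 (hP j))).
have hend : forall j, pos j (sz j) = eta j.
  by move=> j; case: (geo_walk _ _ _ (proj1 (hP j)) (proj2 (hP j))) => _ [].
have hdist : forall j s t, (s <= t)%N -> (t <= sz j)%N -> d (pos j s) (pos j t) = (t - s)%N.
  by move=> j; case: (geo_walk _ _ _ (proj1 (hP j)) (proj2 (hP j))) => _ [].
have hd1 : forall j t, (t <= sz j)%N -> d 1%g (pos j t) = t.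
  by move=> j t ht; have := hdist j 0%N t (leq0n t) ht; rewrite subn0.
have hp0 : forall j, pos j 0%N = 1%g by [].
have hunb : forall T, exists N, forall j, (N <= j)%N -> (T < sz j)%N.
  move=> T; have [N HN] := bd_unbounded _ heta T; exists N => j hj.
  by rewrite /sz (proj2 (hP j)); apply: HN.
have hpick := @koenig_pick pos sz J0 hp0 hadj hunb.
split => //; exists (kray pos J0); split; first split; first by [].
- split.
  + move=> a b; have [j [_ [hsz [_ hag]]]] := hpick (maxn a b) 0%N.
    rewrite -(hag a (leq_maxl _ _)) -(hag b (leq_maxr _ _)).
    have hbs : (b <= sz j)%N by apply: leq_trans hsz; rewrite leq_maxr.
    have has : (a <= sz j)%N by apply: leq_trans hsz; rewrite leq_maxl.
    case: (leqP a b) => hab.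
      by rewrite hdist // nat_abs.
    by rewrite wdist_sym hdist ?nat_abs' // ltnW.
  + apply: eN_cvg0 => e e0.
    have e2 : 0 < e / 2 by rewrite divr_gt0.
    have [N3 HN3] := proj1 heta _ e2.
    have hl1 : 0 < 1 - lambda by rewrite subr_gt0.
    have e3 : 0 < e / 2 * (1 - lambda) by rewrite mulr_gt0.
    have [m0 Hm0] := small_pow _ _ (ltW l0) l1 e3.
    exists (maxn N3 m0) => n hn.
    have hN3n : (N3 <= n)%N := leq_trans (leq_maxl _ _) hn.
    have hm0n : (m0 <= n)%N := leq_trans (leq_maxr _ _) hn.
    have [j [hj [hsz [_ hag]]]] := hpick n N3.
    rewrite /= ger0_norm ?rho_ge0 // /rho1 /Defs.rho1 -(hag n (leqnn n)).
    have t1 := rho_tri 1%g (pos j n) (eta j) (eta n).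
    have t2 : rho 1%g (pos j n) (eta j) <= lambda ^+ n / (1 - lambda).
      rewrite -(hend j).
      exact: (@gseg' (pos j) (sz j) (fun t ht => hd1 j t ht) (hadj j) n (sz j) hsz (leqnn _)).
    have t3 := HN3 j n hj hN3n.
    have t4 : lambda ^+ n / (1 - lambda) < e / 2.
      by rewrite ltr_pdivrMr // Hm0.
    rewrite /rho1 /Defs.rho1 in t3.
    lra.
- have [j [_ [hsz [hJ hag]]]] := hpick (k + M)%N 0%N.
  have [z [hz hzv]] := near j hJ (P j) (proj1 (hP j)) (proj2 (hP j)).
  have [t [ht htz]] := walk_mem_nth 1%g 1%g (P j) z hz.
  have hdt := hd1 j t ht.
  have htri := wdist_tri 1%g v (pos j t).
  rewrite dk in htri.
  rewrite -htz in hzv.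
  have htk : (t <= k + M)%N := nat_near _ _ _ _ _ _ hdt htri (wdist_sym _ _) hzv.
  by exists t; rewrite -(hag t htk) ler_nat.
Qed.
End Main.

Theorem lemma8p12 (G : groupType) (S : seq G) (R : realType) (lambda : R) :
  generates S -> 0 < lambda -> lambda < 1 ->
  (forall Rad : R, 0 < Rad -> exists C1 : R, 0 < C1 /\
     forall (xi gam : nat -> G) (k : nat),
       is_boundary S lambda xi -> geodesic_to S lambda 1%g xi gam ->
       shadow S lambda 1%g (gam k) Rad `<=`
         bd_ball S lambda xi (C1 * lambda ^+ wdist S 1%g (gam k)))
  /\
  (forall kappa : R, 0 < kappa -> exists Rad C2 : R, 0 < Rad /\ 0 < C2 /\
     forall (xi gam : nat -> G) (k : nat),
       is_boundary S lambda xi -> geodesic_to S lambda 1%g xi gam ->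
       kappa <= rho_pt_bd S lambda (gam k) 1%g xi ->
       bd_ball S lambda xi (C2 * lambda ^+ wdist S 1%g (gam k)) `<=`
         shadow S lambda 1%g (gam k) Rad).
Proof.
move=> hg h0 h1; split.
  exact: (@part1 G S R lambda hg h0 h1).
exact: (@part2 G S R lambda hg h0 h1).
Qed.
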